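(* Let $\alpha\in(0,1)$, $a_0,a_1\in\mathbb{C}$, and let $\lambda_1,\lambda_2$ be the roots of $\lambda^2+a_1\lambda+a_0$. Consider ${}^LD^{2\circ\alpha}x+a_1{}^LD^\alpha x+a_0x=0$ with $x(0)=x_0$, ${}^LD^\alpha x(0)=x_{0,1}$, and let $\mathcal{S}$ be its solution space (without initial conditions). If $\lambda_1\neq\lambda_2$, the solution on $[0,\infty)$ is $$x(t)=\frac{x_{0,1}-\lambda_2x_0}{\lambda_1-\lambda_2}\mathcal{E}_\alpha(\lambda_1t)+\frac{\lambda_1x_0-x_{0,1}}{\lambda_1-\lambda_2}\mathcal{E}_\alpha(\lambda_2t),$$ and $\{\mathcal{E}_\alpha(\lambda_1t),\mathcal{E}_\alpha(\lambda_2t)\}$ is a basis of $\mathcal{S}$. If $\lambda_1=\lambda_2=\lambda$, the solution on $[0,\infty)$ is $x(t)=x_0\mathcal{E}_\alpha(\lambda t)+(x_{0,1}-\lambda x_0)\,t\,\mathcal{E}_\alpha'(\lambda t)$, and $\{\mathcal{E}_\alpha(\lambda t),t\mathcal{E}_\alpha'(\lambda t)\}$ is a basis of $\mathcal{S}$.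
   Context: $\mathcal{E}_\alpha(s)=\sum_{n=0}^\infty\frac{s^n}{\Gamma(2-\alpha)^n\prod_{j=1}^n\frac{\Gamma(j+1)}{\Gamma(j+1-\alpha)}}$ (entire), $\mathcal{E}_\alpha'$ its ordinary derivative. Solutions are taken among functions on $[0,\infty)$ given by everywhere convergent power series, with the equation holding for all $t\ge0$. ${}^LD^\alpha x(t)=\frac{\Gamma(2-\alpha)}{t^{1-\alpha}}\cdot\frac{1}{\Gamma(1-\alpha)}\int_0^t (t-\tau)^{-\alpha}x'(\tau)d\tau$ for $t>0$; on power series it acts termwise: ${}^LD^\alpha\sum_nx_nt^n=\sum_nx_{n+1}\frac{\Gamma(n+2)\Gamma(2-\alpha)}{\Gamma(n+2-\alpha)}t^n$, which also defines the value at $t=0$. ${}^LD^{2\circ\alpha}={}^LD^\alpha\circ{}^LD^\alpha$. *)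

(* Defs.v *)
From Stdlib Require Import Reals.
From Coquelicot Require Import Coquelicot.

Open Scope R_scope.

Definition Gamma (s : R) : R :=
  RInt_gen (fun t => Rpower t (s - 1) * exp (- t)) (at_right 0) (Rbar_locally p_infty).

Fixpoint prodG (a : R) (n : nat) : R :=
  match n with
  | O => 1
  | S m => prodG a m * (Gamma (INR m + 2) / Gamma (INR m + 2 - a))
  end.

Definition Ecoef (a : R) (n : nat) : R :=
  / (Gamma (2 - a) ^ n * prodG a n).

Open Scope C_scope.

Definition CSeries (u : nat -> C) : C :=
  (Series (fun n => Re (u n)), Series (fun n => Im (u n))).

Definition CPSeries (c : nat -> C) (z : C) : C :=
  CSeries (fun n => c n * z ^ n).

Definition entire_coef (c : nat -> C) : Prop :=
  forall z : C, @ex_series C_AbsRing C_NormedModule (fun n => c n * z ^ n).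

Definition Ealpha (a : R) (s : C) : C := CPSeries (fun n => RtoC (Ecoef a n)) s.
Definition Ealpha' (a : R) (s : C) : C :=
  CPSeries (fun n => RtoC (INR (S n) * Ecoef a (S n))) s.

(* Termwise action of ^L D^alpha on the coefficients of a power series:
   ^L D^alpha sum_n x_n t^n = sum_n x_{n+1} Gamma(n+2)Gamma(2-a)/Gamma(n+2-a) t^n *)
Definition LDcoef (a : R) (c : nat -> C) (n : nat) : C :=
  c (S n) * RtoC (Gamma (INR n + 2) * Gamma (2 - a) / Gamma (INR n + 2 - a)).

Definition represents (c : nat -> C) (x : R -> C) : Prop :=
  entire_coef c /\ forall t : R, (0 <= t)%R -> x t = CPSeries c (RtoC t).

Definition solves_eq (a : R) (a0 a1 : C) (c : nat -> C) : Prop :=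
  forall t : R, (0 <= t)%R ->
    CPSeries (LDcoef a (LDcoef a c)) (RtoC t)
    + a1 * CPSeries (LDcoef a c) (RtoC t)
    + a0 * CPSeries c (RtoC t) = 0.

Definition in_sol_space (a : R) (a0 a1 : C) (x : R -> C) : Prop :=
  exists c, represents c x /\ solves_eq a a0 a1 c.

Definition solves_ivp (a : R) (a0 a1 x0 x01 : C) (x : R -> C) : Prop :=
  exists c, represents c x /\ solves_eq a a0 a1 c /\
    x 0%R = x0 /\ CPSeries (LDcoef a c) (RtoC 0) = x01.

Definition sol_basis (a : R) (a0 a1 : C) (f1 f2 : R -> C) : Prop :=
  in_sol_space a a0 a1 f1 /\ in_sol_space a a0 a1 f2 /\
  (forall k1 k2 : C, (forall t : R, (0 <= t)%R -> k1 * f1 t + k2 * f2 t = 0) ->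
      k1 = 0 /\ k2 = 0) /\
  (forall x, in_sol_space a a0 a1 x ->
      exists k1 k2 : C, forall t : R, (0 <= t)%R -> x t = k1 * f1 t + k2 * f2 t).

(* Main.v *)
Require Import Defs.
From Stdlib Require Import Reals Lra Lia Arith.
From Coquelicot Require Import Coquelicot.
Open Scope R_scope.

Lemma pow_nR (x : R) n : @pow_n R_AbsRing x n = x ^ n.
Proof. induction n; simpl; try rewrite IHn; reflexivity. Qed.

Ltac fixpow := repeat match goal with |- context [pow_n ?x ?n] =>
  first [rewrite (pow_nR x n) | replace (pow_n x n) with (x ^ n) by (symmetry; apply pow_n_pow)] end.

Lemma CPS_real (c : nat -> C) (t : R) :
  CPSeries c (RtoC t) = (PSeries (fun n => Re (c n)) t, PSeries (fun n => Im (c n)) t).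
Proof.
  unfold CPSeries, CSeries, PSeries. f_equal; apply Series_ext; intro n;
  rewrite <- RtoC_pow; destruct (c n) as [u v]; unfold Re, Im, Cmult, RtoC; simpl; ring.
Qed.

Lemma filterlim_Re (l : C) : filterlim (fun z : C => Re z) (locally l) (locally (Re l)).
Proof.
  intros P [eps HP]. exists eps. intros y Hy. apply HP. apply Hy.
Qed.
Lemma filterlim_Im (l : C) : filterlim (fun z : C => Im z) (locally l) (locally (Im l)).
Proof.
  intros P [eps HP]. exists eps. intros y Hy. apply HP. apply Hy.
Qed.

Lemma sum_n_Re (u : nat -> C) n : Re (@sum_n C_AbelianMonoid u n) = sum_n (fun k => Re (u k)) n.
Proof.
  induction n. rewrite !sum_O; reflexivity.
  rewrite !sum_Sn. rewrite <- IHn. reflexivity.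
Qed.
Lemma sum_n_Im (u : nat -> C) n : Im (@sum_n C_AbelianMonoid u n) = sum_n (fun k => Im (u k)) n.
Proof.
  induction n. rewrite !sum_O; reflexivity.
  rewrite !sum_Sn. rewrite <- IHn. reflexivity.
Qed.

Lemma ex_series_Re (u : nat -> C) : @ex_series C_AbsRing C_NormedModule u ->
  ex_series (fun n => Re (u n)).
Proof.
  intros [l Hl]. exists (Re l). unfold is_series.
  apply filterlim_ext with (fun n => Re (@sum_n C_AbelianMonoid u n)).
  intro n; apply sum_n_Re.
  eapply filterlim_comp. apply Hl. apply filterlim_Re.
Qed.
Lemma ex_series_Im (u : nat -> C) : @ex_series C_AbsRing C_NormedModule u ->
  ex_series (fun n => Im (u n)).
Proof.
  intros [l Hl]. exists (Im l). unfold is_series.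
  apply filterlim_ext with (fun n => Im (@sum_n C_AbelianMonoid u n)).
  intro n; apply sum_n_Im.
  eapply filterlim_comp. apply Hl. apply filterlim_Im.
Qed.

Lemma entire_Re (c : nat -> C) : entire_coef c -> forall x, ex_pseries (fun n => Re (c n)) x.
Proof.
  intros H x. unfold ex_pseries.
  eapply ex_series_ext; [|apply (ex_series_Re _ (H (RtoC x)))].
  intro n; simpl. rewrite <- RtoC_pow. destruct (c n) as [u v]; unfold Re, Cmult, RtoC; simpl.
  unfold scal; simpl; unfold mult; simpl. fixpow; ring.
Qed.
Lemma entire_Im (c : nat -> C) : entire_coef c -> forall x, ex_pseries (fun n => Im (c n)) x.
Proof.
  intros H x. unfold ex_pseries.
  eapply ex_series_ext; [|apply (ex_series_Im _ (H (RtoC x)))].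
  intro n; simpl. rewrite <- RtoC_pow. destruct (c n) as [u v]; unfold Im, Cmult, RtoC; simpl.
  unfold scal; simpl; unfold mult; simpl; fixpow; ring.
Qed.

Lemma bounded_prefix (u : nat -> R) N : exists M, forall n, (n < N)%nat -> Rabs (u n) <= M.
Proof.
  induction N as [|N [M HM]]. exists 0. intros; lia.
  exists (Rmax M (Rabs (u N))). intros n Hn.
  destruct (Nat.eq_dec n N). subst. apply Rmax_r.
  eapply Rle_trans. apply HM; lia. apply Rmax_l.
Qed.

Lemma lim0_bounded (u : nat -> R) : is_lim_seq u 0 -> exists M, forall n, Rabs (u n) <= M.
Proof.
  intros H. apply is_lim_seq_spec in H.
  destruct (H (mkposreal 1 Rlt_0_1)) as [N HN].
  destruct (bounded_prefix u N) as [M HM].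
  exists (Rmax M 1). intros n. destruct (le_lt_dec N n).
  - eapply Rle_trans; [|apply Rmax_r]. specialize (HN n l). simpl in HN.
    rewrite Rminus_0_r in HN. lra.
  - eapply Rle_trans; [apply HM; lia| apply Rmax_l].
Qed.

Lemma entire_radius (b : nat -> R) : (forall x, ex_pseries b x) -> CV_radius b = p_infty.
Proof.
  intros H.
  assert (HS : forall r : R, exists M, forall n, Rabs (b n * r ^ n) <= M).
  { intros r. destruct (lim0_bounded _ (ex_series_lim_0 _ (H r))) as [M HM].
    exists M. intros n. eapply Rle_trans; [|apply (HM n)]. right. f_equal.
    unfold scal; simpl; unfold mult; simpl.
    fixpow. ring. }
  destruct (CV_radius_bounded b) as [Hub _].
  destruct (CV_radius b) as [l| |] eqn:E; auto.
  - exfalso. specialize (Hub (l + 1) (HS (l+1))). simpl in Hub. lra.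
  - exfalso. specialize (Hub 0 (HS 0)). simpl in Hub. auto.
Qed.

Lemma cont_zero_right (f : R -> R) : continuity_pt f 0 -> (forall t, 0 < t -> f t = 0) -> f 0 = 0.
Proof.
  intros Hc Hz. destruct (Req_dec (f 0) 0) as [|Hne]; auto. exfalso.
  assert (He : Rabs (f 0) > 0) by (apply Rabs_pos_lt; auto).
  destruct (Hc (Rabs (f 0)) He) as [al [Hal Hy]].
  specialize (Hy (al/2)). simpl in Hy. unfold R_dist in Hy.
  rewrite Hz in Hy by lra. rewrite Rminus_0_l, Rabs_Ropp in Hy.
  assert (Rabs (f 0) < Rabs (f 0)); [|lra]. apply Hy. split. split. exact I. lra.
  rewrite Rminus_0_r. rewrite Rabs_pos_eq; lra.
Qed.

Lemma ps_zero_coef : forall n (b : nat -> R), (forall x, ex_pseries b x) ->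
  (forall t, 0 <= t -> PSeries b t = 0) -> b n = 0.
Proof.
  induction n; intros b Hb Hz.
  - rewrite <- (PSeries_0 b). apply Hz; lra.
  - change (b (S n)) with (PS_decr_1 b n). apply IHn.
    + intros x. apply CV_radius_inside. rewrite CV_radius_decr_1, entire_radius; simpl; auto.
    + assert (Hp : forall t, 0 < t -> PSeries (PS_decr_1 b) t = 0).
      { intros t Ht. pose proof (PSeries_decr_1 b t (Hb t)) as E. rewrite Hz in E by lra.
        assert (b 0%nat = 0) by (rewrite <- (PSeries_0 b); apply Hz; lra).
        rewrite H, Rplus_0_l in E. symmetry in E. apply Rmult_integral in E. destruct E; lra. }
      intros t Ht. destruct (Req_dec t 0). subst. apply cont_zero_right; auto.
      apply PSeries_continuity. rewrite CV_radius_decr_1, entire_radius; simpl; auto.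
      apply Hp; lra.
Qed.

Lemma cps_zero_coef (c : nat -> C) : entire_coef c ->
  (forall t, 0 <= t -> CPSeries c (RtoC t) = RtoC 0) -> forall n, c n = RtoC 0.
Proof.
  intros He Hz n.
  assert (H1 : Re (c n) = 0).
  { apply (ps_zero_coef n (fun n => Re (c n))). apply entire_Re; auto.
    intros t Ht. specialize (Hz t Ht). rewrite CPS_real in Hz. injection Hz; auto. }
  assert (H2 : Im (c n) = 0).
  { apply (ps_zero_coef n (fun n => Im (c n))). apply entire_Im; auto.
    intros t Ht. specialize (Hz t Ht). rewrite CPS_real in Hz. injection Hz; auto. }
  destruct (c n) as [u v]; simpl in *; subst; reflexivity.
Qed.

Lemma entire_plus (c1 c2 : nat -> C) : entire_coef c1 -> entire_coef c2 ->
  entire_coef (fun n => (c1 n + c2 n)%C).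
Proof.
  intros H1 H2 z. eapply ex_series_ext; [|apply (@ex_series_plus C_AbsRing C_NormedModule _ _ (H1 z) (H2 z))].
  intro n. change (@plus C_AbelianMonoid (c1 n * z ^ n)%C (c2 n * z ^ n)%C = ((c1 n + c2 n) * z ^ n)%C).
  change (@plus C_AbelianMonoid) with Cplus. symmetry; apply Cmult_plus_distr_r.
Qed.

Lemma entire_scal (k : C) (c : nat -> C) : entire_coef c -> entire_coef (fun n => (k * c n)%C).
Proof.
  intros H z. eapply ex_series_ext; [|apply (@ex_series_scal C_AbsRing C_NormedModule k _ (H z))].
  intro n. change (@scal C_AbsRing C_NormedModule) with Cmult. simpl. ring.
Qed.

Lemma entire_ext (c1 c2 : nat -> C) : (forall n, c1 n = c2 n) -> entire_coef c1 -> entire_coef c2.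
Proof.
  intros E H z. eapply ex_series_ext; [|apply (H z)]. intro n; simpl; rewrite E; reflexivity.
Qed.

Lemma CPS_ext (c1 c2 : nat -> C) z : (forall n, c1 n = c2 n) -> CPSeries c1 z = CPSeries c2 z.
Proof.
  intros E. unfold CPSeries, CSeries. f_equal; apply Series_ext; intro n; rewrite E; reflexivity.
Qed.

Lemma CPS_plus (c1 c2 : nat -> C) t : entire_coef c1 -> entire_coef c2 ->
  CPSeries (fun n => (c1 n + c2 n)%C) (RtoC t) = (CPSeries c1 (RtoC t) + CPSeries c2 (RtoC t))%C.
Proof.
  intros H1 H2. rewrite !CPS_real. unfold Cplus; simpl. f_equal.
  - rewrite <- PSeries_plus by (apply entire_Re; auto). apply PSeries_ext. intro n; reflexivity.
  - rewrite <- PSeries_plus by (apply entire_Im; auto). apply PSeries_ext. intro n; reflexivity.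
Qed.

Lemma CPS_scal (k : C) (c : nat -> C) t : entire_coef c ->
  CPSeries (fun n => (k * c n)%C) (RtoC t) = (k * CPSeries c (RtoC t))%C.
Proof.
  intros H. rewrite !CPS_real. destruct k as [kr ki]. unfold Cmult; simpl.
  pose proof (entire_Re c H t) as Hr. pose proof (entire_Im c H t) as Hi.
  f_equal.
  - transitivity (PSeries (PS_minus (PS_scal kr (fun n => Re (c n))) (PS_scal ki (fun n => Im (c n)))) t).
    + apply PSeries_ext. intro n. unfold PS_minus, PS_scal, PS_opp, PS_plus. simpl.
      destruct (c n); simpl. unfold scal; simpl; unfold mult, minus, plus, opp; simpl. ring.
    + rewrite PSeries_minus by (apply ex_pseries_scal; [apply Rmult_comm|auto]). rewrite !PSeries_scal. reflexivity.
  - transitivity (PSeries (PS_plus (PS_scal kr (fun n => Im (c n))) (PS_scal ki (fun n => Re (c n)))) t).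
    + apply PSeries_ext. intro n. unfold PS_scal, PS_plus. simpl.
      destruct (c n); simpl. unfold scal; simpl; unfold mult, plus; simpl. ring.
    + rewrite PSeries_plus by (apply ex_pseries_scal; [apply Rmult_comm|auto]). rewrite !PSeries_scal. ring.
Qed.

Lemma Series_zero : Series (fun _ => 0) = 0.
Proof.
  transitivity (Series (fun n : nat => 0 * 0)). apply Series_ext; intro; ring.
  rewrite Series_scal_l. ring.
Qed.

Lemma CPS_zero t : CPSeries (fun _ => RtoC 0) t = RtoC 0.
Proof.
  unfold CPSeries, CSeries. unfold RtoC. f_equal; simpl.
  all: transitivity (Series (fun _ : nat => 0)); [apply Series_ext; intro n; destruct (Cpow t n); simpl; ring | apply Series_zero].
Qed.

Lemma CPS_at0 (c : nat -> C) : CPSeries c (RtoC 0) = c 0%nat.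
Proof.
  rewrite CPS_real. rewrite !PSeries_0. destruct (c 0%nat); reflexivity.
Qed.

Lemma exp_ge_pow (x : R) (n : nat) : 0 <= x -> x ^ n / INR (fact n) <= exp x.
Proof.
  intros Hx. eapply Rle_trans; [|apply (exp_ge_taylor x n Hx)].
  destruct n. simpl. lra.
  rewrite tech5. assert (0 <= sum_f_R0 (fun k => x ^ k / INR (fact k)) n); [|lra].
  apply cond_pos_sum. intro k. apply Rcomplements.Rdiv_le_0_compat. apply pow_le; auto.
  apply lt_0_INR, lt_O_fact.
Qed.

Lemma powexp_bound (t : R) (j : nat) : 0 < t -> 0 <= t ^ j * exp (- t) <= INR (fact (S j)) / t.
Proof.
  intros Ht. split. apply Rmult_le_pos. apply pow_le; lra. left; apply exp_pos.
  pose proof (exp_ge_pow t (S j) (Rlt_le _ _ Ht)) as H.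
  pose proof (lt_0_INR _ (lt_O_fact (S j))) as Hf.
  rewrite exp_Ropp. apply Rmult_le_reg_r with (exp t). apply exp_pos.
  rewrite Rmult_assoc, Rinv_l by (apply Rgt_not_eq, exp_pos).
  apply Rmult_le_reg_r with t; auto.
  replace (INR (fact (S j)) / t * exp t * t) with (INR (fact (S j)) * exp t) by (field; lra).
  apply Rmult_le_reg_r with (/ INR (fact (S j))). apply Rinv_0_lt_compat; auto.
  replace (INR (fact (S j)) * exp t * / INR (fact (S j))) with (exp t) by (field; lra).
  simpl pow in H. unfold Rdiv in H. lra.
Qed.

Lemma lim_powexp (j : nat) : is_lim (fun t => t ^ j * exp (- t)) p_infty 0.
Proof.
  apply is_lim_spec. intros eps. simpl.
  set (K := INR (fact (S j))).
  assert (HK : 0 < K) by apply lt_0_INR, lt_O_fact.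
  exists (K / eps + 1). intros t Ht.
  assert (Hep := cond_pos eps).
  assert (Ht0 : 0 < t). { assert (0 < K / eps) by (apply Rdiv_lt_0_compat; auto). lra. }
  destruct (powexp_bound t j Ht0) as [H1 H2]. fold K in H2.
  rewrite Rminus_0_r, Rabs_pos_eq by auto.
  eapply Rle_lt_trans; [apply H2|].
  apply Rmult_lt_reg_r with t; auto. unfold Rdiv. rewrite Rmult_assoc, Rinv_l, Rmult_1_r by lra.
  apply Rmult_lt_reg_r with (/ eps). apply Rinv_0_lt_compat; auto.
  rewrite Rmult_assoc, (Rmult_comm t), <- Rmult_assoc, Rinv_r, Rmult_1_l by lra.
  unfold Rdiv in Ht. lra.
Qed.

Fixpoint Fk (k : nat) (t : R) : R :=
  match k with
  | O => - exp (- t)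
  | S m => - t ^ (S m) * exp (- t) + INR (S m) * Fk m t
  end.

Lemma Fk_deriv k t : is_derive (Fk k) t (t ^ k * exp (- t)).
Proof.
  induction k.
  - simpl. auto_derive. auto. ring.
  - apply is_derive_ext with (fun t => - t ^ (S k) * exp (- t) + INR (S k) * Fk k t).
    intro; reflexivity.
    assert (H1 : is_derive (fun t => - t ^ (S k) * exp (- t)) t
                   (- (INR (S k) * t ^ k) * exp (- t) + t ^ (S k) * exp (- t))).
    { auto_derive. auto. simpl; ring. }
    pose proof (is_derive_scal (Fk k) t (INR (S k)) _ IHk) as H2.
    pose proof (is_derive_plus _ _ _ _ _ H1 H2) as H3.
    replace (t ^ S k * exp (- t)) with
      (plus (- (INR (S k) * t ^ k) * exp (- t) + t ^ (S k) * exp (- t)) (scal (INR (S k)) (t ^ k * exp (- t)))).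
    exact H3. unfold plus, scal; simpl; unfold mult; simpl. ring.
Qed.

Lemma Fk_at0 k : Fk k 0 = - INR (fact k).
Proof.
  induction k. simpl. rewrite Ropp_0, exp_0. reflexivity.
  replace (Fk (S k) 0) with (- 0 ^ (S k) * exp (-0) + INR (S k) * Fk k 0) by reflexivity. rewrite IHk, fact_simpl, mult_INR. rewrite pow_i by lia. ring.
Qed.

Lemma Fk_cont k t : continuous (Fk k) t.
Proof. apply (ex_derive_continuous (Fk k)). eexists. apply Fk_deriv. Qed.

Lemma Fk_lim_right k : filterlim (Fk k) (at_right 0) (locally (- INR (fact k))).
Proof.
  rewrite <- Fk_at0. intros P HP. apply filter_le_within. apply Fk_cont. auto.
Qed.

Lemma Fk_lim_infty k : is_lim (Fk k) p_infty 0.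
Proof.
  induction k.
  - simpl. apply is_lim_ext with (fun t => - (t ^ 0 * exp (- t))). intro; simpl; ring.
    replace (Finite 0) with (Rbar_opp 0) by (simpl; f_equal; ring).
    apply is_lim_opp. apply lim_powexp.
  - apply is_lim_ext with (fun t => - (t ^ (S k) * exp (- t)) + INR (S k) * Fk k t).
    intro; simpl; ring.
    eapply is_lim_plus. apply is_lim_opp. apply lim_powexp.
    apply is_lim_scal_l. apply IHk. unfold is_Rbar_plus; simpl. f_equal. f_equal. ring.
Qed.

Lemma ev_ab (P : R -> R -> Prop) : (forall a b, 0 < a < 1 -> 1 < b -> P a b) ->
  filter_prod (at_right 0) (Rbar_locally p_infty) (fun ab => P (fst ab) (snd ab)).
Proof.
  intros H. exists (fun a => 0 < a < 1) (fun b => 1 < b).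
  - exists (mkposreal 1 Rlt_0_1). intros y Hy Hpos. simpl in Hy.
    unfold ball in Hy; simpl in Hy; unfold AbsRing_ball, abs, minus, plus, opp in Hy; simpl in Hy.
    apply Rabs_def2 in Hy. lra.
  - exists 1. auto.
  - intros a b Ha Hb. simpl. auto.
Qed.

Lemma powexp_int k : is_RInt_gen (fun t => t ^ k * exp (- t)) (at_right 0) (Rbar_locally p_infty) (INR (fact k)).
Proof.
  apply is_RInt_gen_ext with (Derive (Fk k)).
  - apply filter_forall. intros ab x _. apply is_derive_unique, Fk_deriv.
  - replace (INR (fact k)) with (0 - - INR (fact k)) by ring.
    apply is_RInt_gen_Derive.
    + apply filter_forall. intros. eexists; apply Fk_deriv.
    + apply filter_forall. intros ab x _.
      apply continuous_ext with (fun t => t ^ k * exp (- t)).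
      intro; symmetry; apply is_derive_unique, Fk_deriv.
      apply (ex_derive_continuous (fun t => t ^ k * exp (- t))). auto_derive. auto.
    + apply Fk_lim_right.
    + apply Fk_lim_infty.
Qed.

Section Cmp.
Variables f g : R -> R.
Hypothesis fc : forall t, 0 < t -> continuous f t.
Hypothesis gc : forall t, 0 < t -> continuous g t.
Hypothesis fg : forall t, 0 < t -> 0 <= f t <= g t.

Lemma exR (h : R -> R) a b : (forall t, 0 < t -> continuous h t) -> 0 < a -> 0 < b -> ex_RInt h a b.
Proof.
  intros Hc Ha Hb. apply (@ex_RInt_continuous R_CompleteNormedModule). intros z Hz. apply Hc.
  assert (0 < Rmin a b) by (apply Rmin_glb_lt; auto). lra.
Qed.

Lemma chasR (h : R -> R) a b c : (forall t, 0 < t -> continuous h t) -> 0 < a -> 0 < b -> 0 < c ->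
  RInt h a c = RInt h a b + RInt h b c.
Proof.
  intros Hc Ha Hb Hcc. symmetry. apply (RInt_Chasles h a b c); apply exR; auto.
Qed.

Lemma absle x y : 0 < x -> 0 < y -> Rabs (RInt f x y) <= Rabs (RInt g x y).
Proof.
  intros Hx Hy.
  assert (K : forall u v, 0 < u -> u <= v -> Rabs (RInt f u v) <= Rabs (RInt g u v)).
  { intros u v Hu Huv. eapply Rle_trans; [|apply Rle_abs].
    apply (@norm_RInt_le R_NormedModule f g u v (RInt f u v) (RInt g u v)); auto.
    intros z Hz. specialize (fg z ltac:(lra)). unfold norm; simpl; unfold abs; simpl.
    rewrite Rabs_pos_eq; lra.
    apply (@RInt_correct R_CompleteNormedModule), exR; auto; lra.
    apply (@RInt_correct R_CompleteNormedModule), exR; auto; lra. }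
  destruct (Rle_lt_dec x y). apply K; auto.
  rewrite <- (opp_RInt_swap f) by (apply exR; auto).
  rewrite <- (opp_RInt_swap g) by (apply exR; auto).
  unfold opp; simpl. rewrite !Rabs_Ropp. apply K; auto. lra.
Qed.

Lemma ex_gen_cmp lg : is_RInt_gen g (at_right 0) (Rbar_locally p_infty) lg ->
  ex_RInt_gen f (at_right 0) (Rbar_locally p_infty).
Proof.
  intros Hg.
  assert (Dom : forall h : R -> R, (forall t, 0 < t -> continuous h t) ->
    filter_prod (at_right 0) (Rbar_locally p_infty)
      (fun x => (exists y, is_RInt h (fst x) (snd x) y) /\
                (forall y1 y2, is_RInt h (fst x) (snd x) y1 -> is_RInt h (fst x) (snd x) y2 -> y1 = y2))).
  { intros h Hh. apply (ev_ab (fun a b => (exists y, is_RInt h a b y) /\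
                (forall y1 y2, is_RInt h a b y1 -> is_RInt h a b y2 -> y1 = y2))).
    intros a b Ha Hb. split. exists (RInt h a b). apply (@RInt_correct R_CompleteNormedModule), exR; auto; lra.
    intros y1 y2 H1 H2. apply (@is_RInt_unique R_CompleteNormedModule) in H1. apply (@is_RInt_unique R_CompleteNormedModule) in H2. congruence. }
  pose proof (proj2 (filterlimi_locally_cauchy (fun ab => is_RInt g (fst ab) (snd ab)) (Dom g gc)) (ex_intro _ lg Hg)) as Cg.
  apply (proj1 (filterlimi_locally_cauchy (fun ab => is_RInt f (fst ab) (snd ab)) (Dom f fc))).
  intros eps.
  destruct (Cg (pos_div_2 eps)) as [P0 [HP0 HC]].
  destruct HP0 as [Q R HQ HR HQR].
  exists (fun u => (Q (fst u) /\ 0 < fst u < 1) /\ (R (snd u) /\ 1 < snd u)).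
  split.
  { apply Filter_prod with (fun a => Q a /\ 0 < a < 1) (fun b => R b /\ 1 < b).
    - apply filter_and; auto. exists (mkposreal 1 Rlt_0_1). intros y Hy Hpos. simpl in Hy.
      unfold ball in Hy; simpl in Hy; unfold AbsRing_ball, abs, minus, plus, opp in Hy; simpl in Hy.
      apply Rabs_def2 in Hy. lra.
    - apply filter_and; auto. exists 1. auto.
    - intros x y Hx Hy. simpl. auto. }
  intros [a b] [a' b'] [[Qa Ha] [Rb Hb]] [[Qa' Ha'] [Rb' Hb']] u' v' Hu Hv. simpl in *.
  apply (@is_RInt_unique R_CompleteNormedModule) in Hu. apply (@is_RInt_unique R_CompleteNormedModule) in Hv. subst u' v'.
  assert (G : forall x y x' y', Q x -> R y -> Q x' -> R y' -> 0 < x < 1 -> 0 < x' < 1 -> 1 < y -> 1 < y' ->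
             Rabs (RInt g x' y' - RInt g x y) < eps / 2).
  { intros x y x' y' H1 H2 H3 H4 H5 H6 H7 H8.
    specialize (HC (x, y) (x', y') (HQR _ _ H1 H2) (HQR _ _ H3 H4) (RInt g x y) (RInt g x' y')).
    simpl in HC. apply HC; apply (@RInt_correct R_CompleteNormedModule), exR; auto; lra. }
  pose proof (G a b a' b Qa Rb Qa' Rb Ha Ha' Hb Hb) as G1.
  pose proof (G a' b a' b' Qa' Rb Qa' Rb' Ha' Ha' Hb Hb') as G2.
  pose proof (absle a a' ltac:(lra) ltac:(lra)) as A1.
  pose proof (absle b' b ltac:(lra) ltac:(lra)) as A2.
  rewrite (chasR g a a' b) in G1 by (auto; lra).
  rewrite (chasR g a' b' b) in G2 by (auto; lra).
  change (Rabs (RInt f a' b' - RInt f a b) < eps).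
  rewrite (chasR f a a' b) by (auto; lra).
  rewrite (chasR f a' b' b) by (auto; lra).
  replace (RInt g a' b - (RInt g a a' + RInt g a' b)) with (- RInt g a a') in G1 by ring.
  replace (RInt g a' b' - (RInt g a' b' + RInt g b' b)) with (- RInt g b' b) in G2 by ring.
  rewrite Rabs_Ropp in G1, G2.
  replace (RInt f a' b' - (RInt f a a' + (RInt f a' b' + RInt f b' b))) with (- (RInt f a a' + RInt f b' b)) by ring.
  rewrite Rabs_Ropp. eapply Rle_lt_trans. apply Rabs_triang. simpl in G1, G2. lra.
Qed.
End Cmp.

Lemma exp_le' x y : x <= y -> exp x <= exp y.
Proof. intros [H|H]. left; apply exp_increasing; auto. subst; lra. Qed.
Lemma ln_le' x y : 0 < x -> x <= y -> ln x <= ln y.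
Proof. intros Hx [H|H]. left; apply ln_increasing; auto. subst; lra. Qed.
Lemma ln_nonneg x : 1 <= x -> 0 <= ln x.
Proof. intros H. rewrite <- ln_1. apply ln_le'; lra. Qed.
Lemma ln_nonpos x : 0 < x -> x <= 1 -> ln x <= 0.
Proof. intros H H1. rewrite <- ln_1. apply ln_le'; lra. Qed.

Lemma Rpower_mono_base t T x : 0 < t -> t <= T -> 0 <= x -> Rpower t x <= Rpower T x.
Proof. intros. unfold Rpower. apply exp_le'. apply Rmult_le_compat_l; auto. apply ln_le'; auto. Qed.
Lemma Rpower_anti_base t T x : 0 < T -> T <= t -> x <= 0 -> Rpower t x <= Rpower T x.
Proof. intros. unfold Rpower. apply exp_le'. apply Rmult_le_compat_neg_l; auto. apply ln_le'; auto. Qed.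
Lemma Rpower_mono_exp t x y : 1 <= t -> x <= y -> Rpower t x <= Rpower t y.
Proof. intros. apply Rle_Rpower; auto. Qed.
Lemma Rpower_anti_exp t x y : 0 < t -> t <= 1 -> x <= y -> Rpower t y <= Rpower t x.
Proof. intros. unfold Rpower. apply exp_le'. pose proof (ln_nonpos t H H0). nra. Qed.
Lemma Rpower_pos t x : 0 < Rpower t x.
Proof. apply exp_pos. Qed.

Definition gi (s t : R) : R := Rpower t (s - 1) * exp (- t).

Lemma gi_cont s t : 0 < t -> continuous (gi s) t.
Proof.
  intros Ht. apply (ex_derive_continuous (gi s)). unfold gi, Rpower. auto_derive. lra.
Qed.

Lemma powexp_cont k t : continuous (fun t => t ^ k * exp (- t)) t.
Proof. apply (ex_derive_continuous (fun t => t ^ k * exp (- t))). auto_derive. auto. Qed.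

Lemma gen_le (f g : R -> R) lf lg : (forall t, 0 < t -> f t <= g t) ->
  is_RInt_gen f (at_right 0) (Rbar_locally p_infty) lf ->
  is_RInt_gen g (at_right 0) (Rbar_locally p_infty) lg -> lf <= lg.
Proof.
  intros Hfg Hf Hg.
  pose proof (is_RInt_gen_minus g f lg lf Hg Hf) as Hm.
  pose proof (is_RInt_gen_scal f 0 lf Hf) as Hz.
  pose proof (@RInt_gen_norm R_CompleteNormedModule (at_right 0) (Rbar_locally p_infty) _ _ (fun y => scal 0 (f y)) (fun y => minus (g y) (f y)) (scal 0 lf) (minus lg lf)) as K.
  assert (norm (scal 0 lf) <= minus lg lf).
  { apply K; auto.
    - apply (ev_ab (fun a b => a <= b)). intros; lra.
    - apply (ev_ab (fun a b => forall x, a <= x <= b -> norm (scal 0 (f x)) <= minus (g x) (f x))).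
      intros a b Ha Hb x Hx. unfold scal, norm, minus, plus, opp; simpl; unfold mult, abs; simpl.
      rewrite Rmult_0_l, Rabs_R0. specialize (Hfg x ltac:(lra)). lra. }
  unfold scal, norm, minus, plus, opp in H; simpl in H; unfold mult, abs in H; simpl in H.
  rewrite Rmult_0_l, Rabs_R0 in H. lra.
Qed.

Lemma gen_ext_pos (f g : R -> R) l : (forall t, 0 < t -> f t = g t) ->
  is_RInt_gen f (at_right 0) (Rbar_locally p_infty) l ->
  is_RInt_gen g (at_right 0) (Rbar_locally p_infty) l.
Proof.
  intros E H. apply is_RInt_gen_ext with f; auto.
  apply (ev_ab (fun a b => forall x, Rmin a b < x < Rmax a b -> f x = g x)).
  intros a b Ha Hb x Hx. apply E. rewrite Rmin_left in Hx; lra.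
Qed.

Lemma powexp_int2 k : is_RInt_gen (fun t => t ^ 0 * exp (- t) + t ^ k * exp (- t)) (at_right 0) (Rbar_locally p_infty) (INR (fact 0) + INR (fact k)).
Proof. exact (is_RInt_gen_plus _ _ _ _ (powexp_int 0) (powexp_int k)). Qed.
Lemma gi_dom s k : 1 <= s -> INR k > s - 1 -> forall t, 0 < t -> 0 <= gi s t <= t ^ 0 * exp (- t) + t ^ k * exp (- t).
Proof.
  intros Hs Hk t Ht. unfold gi. split. apply Rmult_le_pos; left; [apply Rpower_pos|apply exp_pos].
    rewrite <- Rmult_plus_distr_r. apply Rmult_le_compat_r. left; apply exp_pos.
    destruct (Rle_lt_dec t 1).
    + assert (Rpower t (s - 1) <= Rpower t 0) by (apply Rpower_anti_exp; lra).
      rewrite Rpower_O in H by lra. pose proof (pow_le t k ltac:(lra)). rewrite pow_O. lra.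
    + rewrite <- (Rpower_pow k t) by lra.
      assert (Rpower t (s - 1) <= Rpower t (INR k)) by (apply Rpower_mono_exp; lra). rewrite pow_O; lra.
Qed.
Lemma G_cont k t : continuous (fun t => t ^ 0 * exp (- t) + t ^ k * exp (- t)) t.
Proof. apply (ex_derive_continuous (fun t => t ^ 0 * exp (- t) + t ^ k * exp (- t))). auto_derive. auto. Qed.
Lemma Gamma_ex s : 1 <= s -> ex_RInt_gen (gi s) (at_right 0) (Rbar_locally p_infty).
Proof.
  intros Hs. destruct (INR_unbounded (s - 1)) as [k Hk].
  exact (ex_gen_cmp (gi s) _ (gi_cont s) (fun t _ => G_cont k t) (gi_dom s k Hs Hk) _ (powexp_int2 k)).
Qed.
Lemma Gamma_is s : 1 <= s -> is_RInt_gen (gi s) (at_right 0) (Rbar_locally p_infty) (Gamma s).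
Proof.
  intros Hs. exact (@RInt_gen_correct R_CompleteNormedModule _ _ (Proper_StrongProper _ (at_right_proper_filter 0)) (Proper_StrongProper _ (Rbar_locally_filter p_infty)) (gi s) (Gamma_ex s Hs)).
Qed.

Definition PR := Proper_StrongProper _ (at_right_proper_filter 0).
Definition PI := Proper_StrongProper _ (Rbar_locally_filter p_infty).

Lemma gen_unique (f : R -> R) (l : R) : @is_RInt_gen R_NormedModule f (at_right 0) (Rbar_locally p_infty) l ->
  @RInt_gen R_CompleteNormedModule f (at_right 0) (Rbar_locally p_infty) = l.
Proof. intros H. exact (@is_RInt_gen_unique R_CompleteNormedModule _ _ PR PI f l H). Qed.

Lemma Gamma_nat n : Gamma (INR n + 2) = INR (fact (S n)).
Proof.
  unfold Gamma. apply gen_unique.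
  apply (gen_ext_pos (fun t => t ^ (S n) * exp (- t))). 2: apply powexp_int.
  intros t Ht. rewrite <- Rpower_pow by auto. rewrite S_INR. f_equal. f_equal. ring.
Qed.

Section GB.
Variable a : R.
Hypothesis ha : 0 < a < 1.

Lemma gi_sn n t : 0 < t -> gi (INR n + 2 - a) t = Rpower t (INR n + 1 - a) * exp (- t).
Proof. intros. unfold gi. f_equal. f_equal. ring. Qed.

Lemma Gamma_sn_is n : is_RInt_gen (gi (INR n + 2 - a)) (at_right 0) (Rbar_locally p_infty) (Gamma (INR n + 2 - a)).
Proof. apply Gamma_is. pose proof (pos_INR n). lra. Qed.

Lemma pow_Rpower t n : 0 < t -> t ^ n = Rpower t (INR n).
Proof. intros. rewrite Rpower_pow; auto. Qed.

Lemma Glow1 n : INR (fact n) - 1 <= Gamma (INR n + 2 - a).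
Proof.
  apply (gen_le (fun t => minus (t ^ n * exp (- t)) (t ^ 0 * exp (- t))) (gi (INR n + 2 - a))
    (minus (INR (fact n)) (INR (fact 0)))).
  - intros t Ht. rewrite gi_sn by auto. unfold minus, plus, opp; simpl.
    assert (t ^ n - 1 <= Rpower t (INR n + 1 - a)).
    { pose proof (pos_INR n). rewrite (pow_Rpower t n Ht). destruct (Rle_lt_dec t 1).
      - assert (Rpower t (INR n) <= Rpower t 0) by (apply Rpower_anti_exp; lra).
        rewrite Rpower_O in H0 by lra. pose proof (Rpower_pos t (INR n + 1 - a)). lra.
      - assert (Rpower t (INR n) <= Rpower t (INR n + 1 - a)) by (apply Rpower_mono_exp; lra). lra. }
    pose proof (exp_pos (- t)). nra.
  - exact (is_RInt_gen_minus _ _ _ _ (powexp_int n) (powexp_int 0)).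
  - apply Gamma_sn_is.
Qed.

Lemma Glow2 n : INR (fact (S n)) - / 4 * INR (fact (S (S n))) <= Gamma (INR n + 2 - a).
Proof.
  apply (gen_le (fun t => minus (t ^ (S n) * exp (- t)) (scal (/ 4) (t ^ (S (S n)) * exp (- t)))) (gi (INR n + 2 - a))
    (minus (INR (fact (S n))) (scal (/ 4) (INR (fact (S (S n))))))).
  - intros t Ht. rewrite gi_sn by auto. unfold minus, plus, opp, scal; simpl; unfold mult; simpl.
    assert (t ^ (S n) - / 4 * t ^ (S (S n)) <= Rpower t (INR n + 1 - a)).
    { replace (INR n + 1 - a) with (INR n + (1 - a)) by ring. rewrite Rpower_plus.
      rewrite <- (pow_Rpower t n Ht).
      assert (t - / 4 * (t * t) <= Rpower t (1 - a)).
      { destruct (Rle_lt_dec t 1).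
        - assert (Rpower t 1 <= Rpower t (1 - a)) by (apply Rpower_anti_exp; lra).
          rewrite Rpower_1 in H by lra. nra.
        - assert (Rpower t 0 <= Rpower t (1 - a)) by (apply Rpower_mono_exp; lra).
          rewrite Rpower_O in H by lra. replace (t - / 4 * (t * t)) with (1 - / 4 * ((t - 2) * (t - 2))) by field. assert (0 <= / 4 * ((t - 2) * (t - 2))) by (apply Rmult_le_pos; [lra | apply Rle_0_sqr]). lra. }
      pose proof (pow_le t n ltac:(lra)). simpl. nra. }
    pose proof (exp_pos (- t)). apply Rle_trans with ((t ^ S n - / 4 * t ^ S (S n)) * exp (- t)); [right; simpl; ring | apply Rmult_le_compat_r; lra].
  - exact (is_RInt_gen_minus _ _ _ _ (powexp_int (S n)) (is_RInt_gen_scal _ (/ 4) _ (powexp_int (S (S n))))).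
  - apply Gamma_sn_is.
Qed.

Lemma Gup n T : 1 <= T -> Gamma (INR n + 2 - a) <= T ^ (S n) + Rpower T (- a) * INR (fact (S n)).
Proof.
  intros HT.
  apply Rle_trans with (plus (scal (T ^ (S n)) (INR (fact 0))) (scal (Rpower T (- a)) (INR (fact (S n))))).
  2: { unfold plus, scal; simpl; unfold mult; simpl; right; ring. }
  apply (gen_le (gi (INR n + 2 - a)) (fun t => plus (scal (T ^ (S n)) (t ^ 0 * exp (- t))) (scal (Rpower T (- a)) (t ^ (S n) * exp (- t))))
    _ (plus (scal (T ^ (S n)) (INR (fact 0))) (scal (Rpower T (- a)) (INR (fact (S n)))))).
  - intros t Ht. rewrite gi_sn by auto. unfold plus, scal; simpl; unfold mult; simpl.
    assert (Rpower t (INR n + 1 - a) <= T ^ (S n) + Rpower T (- a) * t ^ (S n)).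
    { pose proof (pos_INR n). pose proof (Rpower_pos T (- a)). pose proof (pow_le t (S n) ltac:(lra)).
      destruct (Rle_lt_dec t T).
      - assert (Rpower t (INR n + 1 - a) <= Rpower T (INR n + 1 - a)) by (apply Rpower_mono_base; lra).
        assert (Rpower T (INR n + 1 - a) <= Rpower T (INR (S n))) by (apply Rpower_mono_exp; rewrite ?S_INR; lra).
        rewrite <- (pow_Rpower T (S n)) in H3 by lra. nra.
      - replace (INR n + 1 - a) with (INR (S n) + - a) by (rewrite S_INR; ring). rewrite Rpower_plus.
        rewrite <- (pow_Rpower t (S n)) by lra.
        assert (Rpower t (- a) <= Rpower T (- a)) by (apply Rpower_anti_base; lra).
        pose proof (pow_le T (S n) ltac:(lra)). nra. }
    pose proof (exp_pos (- t)). simpl in *. nra.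
  - apply Gamma_sn_is.
  - exact (is_RInt_gen_plus _ _ _ _ (is_RInt_gen_scal _ (T ^ (S n)) _ (powexp_int 0)) (is_RInt_gen_scal _ (Rpower T (- a)) _ (powexp_int (S n)))).
Qed.

End GB.

Section Main.
Variable a : R.
Hypothesis ha : 0 < a < 1.

Definition gg (n : nat) : R := Gamma (INR n + 2) * Gamma (2 - a) / Gamma (INR n + 2 - a).

Lemma fact_ge1 n : 1 <= INR (fact n).
Proof. change 1 with (INR 1). apply le_INR. pose proof (lt_O_fact n). lia. Qed.

Lemma Gsn_low n : INR (fact n) / 2 <= Gamma (INR n + 2 - a).
Proof.
  destruct n as [|[|n]].
  - pose proof (Glow2 a ha 0). simpl in *. lra.
  - pose proof (Glow2 a ha 1). simpl in *. lra.
  - pose proof (Glow1 a ha (S (S n))).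
    assert (2 <= INR (fact (S (S n)))).
    { rewrite fact_simpl, mult_INR. pose proof (fact_ge1 (S n)). rewrite (S_INR (S n)).
      assert (1 <= INR (S n)) by (rewrite S_INR; pose proof (pos_INR n); lra). nra. }
    lra.
Qed.

Lemma Gsn_pos n : 0 < Gamma (INR n + 2 - a).
Proof. pose proof (Gsn_low n). pose proof (fact_ge1 n). lra. Qed.

Lemma G2a : 1 / 2 <= Gamma (2 - a).
Proof.
  pose proof (Gsn_low 0). replace (INR 0 + 2 - a) with (2 - a) in H by (simpl; ring).
  simpl in H. lra.
Qed.

Lemma Gnat_pos n : 0 < Gamma (INR n + 2).
Proof. rewrite Gamma_nat. pose proof (fact_ge1 (S n)). lra. Qed.

Lemma gg_pos n : 0 < gg n.
Proof.
  unfold gg. pose proof (Gsn_pos n). pose proof (Gnat_pos n). pose proof G2a.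
  apply Rdiv_lt_0_compat; auto. apply Rmult_lt_0_compat; lra.
Qed.

Lemma gg_le n : gg n <= 2 * Gamma (2 - a) * INR (S n).
Proof.
  unfold gg. rewrite Gamma_nat. pose proof (Gsn_low n). pose proof (Gsn_pos n). pose proof G2a.
  pose proof (fact_ge1 n).
  rewrite fact_simpl, mult_INR.
  apply Rmult_le_reg_r with (Gamma (INR n + 2 - a)); auto.
  unfold Rdiv. rewrite Rmult_assoc, Rinv_l, Rmult_1_r by lra.
  pose proof (pos_INR (S n)).
  assert (0 <= Gamma (2 - a) * INR (S n)) by (apply Rmult_le_pos; lra).
  nra.
Qed.

Lemma gg_big M : exists N, forall n, (N <= n)%nat -> M <= gg n.
Proof.
  set (K := Gamma (2 - a)). assert (HK : 1/2 <= K) by apply G2a.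
  set (M' := Rmax M 1). assert (HM : 1 <= M') by apply Rmax_r.
  set (c := K / (2 * M')). assert (Hc : 0 < c) by (unfold c; apply Rdiv_lt_0_compat; lra).
  set (u := Rmax 0 (- ln c / a)). set (T := exp u).
  assert (HT : 1 <= T). { unfold T. rewrite <- exp_0. apply exp_le'. apply Rmax_l. }
  assert (HTa : Rpower T (- a) <= c).
  { unfold T, Rpower. rewrite ln_exp. rewrite <- (exp_ln c) by auto. apply exp_le'.
    assert (- ln c / a <= u) by apply Rmax_r.
    apply Rmult_le_compat_r with (r := a) in H; [|lra]. unfold Rdiv in H.
    rewrite Rmult_assoc, Rinv_l, Rmult_1_r in H by lra. lra. }
  destruct (cv_speed_pow_fact T c Hc) as [N HN].
  exists N. intros n Hn.
  assert (H1 : T ^ S n / INR (fact (S n)) < c).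
  { specialize (HN (S n) ltac:(lia)). unfold R_dist in HN. rewrite Rminus_0_r in HN.
    eapply Rle_lt_trans; [apply Rle_abs|]; auto. }
  pose proof (Gup a ha n T HT) as HG.
  pose proof (fact_ge1 (S n)) as Hf.
  assert (HG2 : Gamma (INR n + 2 - a) <= 2 * c * INR (fact (S n))).
  { apply Rmult_lt_compat_r with (r := INR (fact (S n))) in H1; [|lra].
    unfold Rdiv in H1. rewrite Rmult_assoc, Rinv_l, Rmult_1_r in H1 by lra.
    assert (Rpower T (- a) * INR (fact (S n)) <= c * INR (fact (S n))) by (apply Rmult_le_compat_r; lra).
    lra. }
  unfold gg. rewrite Gamma_nat. fold K. pose proof (Gsn_pos n).
  apply Rle_trans with M'; [apply Rmax_l|].
  apply Rmult_le_reg_r with (Gamma (INR n + 2 - a)); auto.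
  unfold Rdiv. rewrite Rmult_assoc, Rinv_l, Rmult_1_r by lra.
  apply Rle_trans with (M' * (2 * c * INR (fact (S n)))). apply Rmult_le_compat_l; lra.
  unfold c. right. field. lra.
Qed.

Lemma prodG_pos n : 0 < prodG a n.
Proof.
  induction n; simpl. lra. apply Rmult_lt_0_compat; auto.
  apply Rdiv_lt_0_compat. apply Gnat_pos. apply Gsn_pos.
Qed.

Lemma Ecoef_pos n : 0 < Ecoef a n.
Proof.
  unfold Ecoef. apply Rinv_0_lt_compat. apply Rmult_lt_0_compat. apply pow_lt. pose proof G2a; lra.
  apply prodG_pos.
Qed.

Lemma Ecoef_0 : Ecoef a 0 = 1.
Proof. unfold Ecoef. simpl. field. Qed.

Lemma Ecoef_rec n : Ecoef a (S n) * gg n = Ecoef a n.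
Proof.
  unfold Ecoef, gg. simpl. pose proof (prodG_pos n). pose proof (Gnat_pos n). pose proof (Gsn_pos n).
  pose proof G2a. assert (0 < Gamma (2 - a) ^ n) by (apply pow_lt; lra).
  field. repeat split; lra.
Qed.

Lemma ratio_series (u : nat -> R) : (forall n, 0 <= u n) ->
  (exists N, forall n, (N <= n)%nat -> u (S n) <= u n / 2) -> ex_series u.
Proof.
  intros Hp [N HN].
  apply (ex_series_incr_n u N).
  assert (Hb : forall k, u (N + k)%nat <= u N * (/ 2) ^ k).
  { induction k. rewrite Nat.add_0_r. simpl. lra.
    replace (N + S k)%nat with (S (N + k)) by lia. specialize (HN (N + k)%nat ltac:(lia)).
    simpl. lra. }
  apply (@ex_series_le R_AbsRing R_CompleteNormedModule _ (fun k => u N * (/ 2) ^ k)).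
  - intros k. unfold norm; simpl; unfold abs; simpl. rewrite Rabs_pos_eq by auto. apply Hb.
  - apply (@ex_series_scal R_AbsRing R_NormedModule (u N) (fun k => (/ 2) ^ k)).
    apply ex_series_geom. rewrite Rabs_pos_eq; lra.
Qed.

Lemma Eser rho : 0 <= rho -> ex_series (fun n => Ecoef a n * rho ^ n).
Proof.
  intros Hr. apply ratio_series.
  - intro n. apply Rmult_le_pos. left; apply Ecoef_pos. apply pow_le; auto.
  - destruct (gg_big (2 * rho)) as [N HN]. exists N. intros n Hn.
    specialize (HN n Hn). pose proof (Ecoef_rec n). pose proof (gg_pos n).
    pose proof (Ecoef_pos n). pose proof (Ecoef_pos (S n)). pose proof (pow_le rho n Hr).
    simpl. rewrite <- H.
    assert (Ecoef a (S n) * (rho * rho ^ n) * 2 <= Ecoef a (S n) * gg n * rho ^ n); [|lra].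
    replace (Ecoef a (S n) * (rho * rho ^ n) * 2) with (Ecoef a (S n) * rho ^ n * (2 * rho)) by ring.
    replace (Ecoef a (S n) * gg n * rho ^ n) with (Ecoef a (S n) * rho ^ n * gg n) by ring.
    apply Rmult_le_compat_l; auto. apply Rmult_le_pos; lra.
Qed.

Definition ecoef (l : C) (n : nat) : C := (RtoC (Ecoef a n) * l ^ n)%C.
Definition dcoef (l : C) (n : nat) : C :=
  match n with O => RtoC 0 | S m => (RtoC (INR (S m) * Ecoef a (S m)) * l ^ m)%C end.

Lemma e_entire l : entire_coef (ecoef l).
Proof.
  intros z. apply (@ex_series_le C_AbsRing C_CompleteNormedModule _ (fun n => Ecoef a n * (Cmod l * Cmod z) ^ n)).
  - intros n. change (norm (ecoef l n * z ^ n)%C) with (Cmod (ecoef l n * z ^ n)%C).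
    unfold ecoef. rewrite !Cmod_mult, !Cmod_pow, Cmod_R, Rabs_pos_eq by (left; apply Ecoef_pos).
    rewrite Rpow_mult_distr. right; ring.
  - apply Eser. apply Rmult_le_pos; apply Cmod_ge_0.
Qed.

Lemma pow2_ge n : INR n <= 2 ^ n.
Proof.
  induction n. simpl; lra. rewrite S_INR. simpl.
  assert (1 <= 2 ^ n) by (apply pow_R1_Rle; lra). lra.
Qed.

Lemma d_entire l : entire_coef (dcoef l).
Proof.
  intros z. apply (@ex_series_le C_AbsRing C_CompleteNormedModule _ (fun n => Ecoef a n * (2 * (Cmod l + 1) * Cmod z) ^ n)).
  - intros n. change (norm (dcoef l n * z ^ n)%C) with (Cmod (dcoef l n * z ^ n)%C).
    pose proof (Cmod_ge_0 l). pose proof (Cmod_ge_0 z).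
    destruct n as [|m].
    + simpl. rewrite Cmult_0_l, Cmod_0. rewrite Rmult_1_r. left; apply Ecoef_pos.
    + unfold dcoef. rewrite !Cmod_mult, !Cmod_pow, Cmod_R, Rabs_pos_eq.
      2: { apply Rmult_le_pos. apply pos_INR. left; apply Ecoef_pos. }
      rewrite !Rpow_mult_distr.
      pose proof (pow2_ge (S m)). pose proof (Ecoef_pos (S m)).
      assert (Cmod l ^ m <= (Cmod l + 1) ^ S m).
      { apply Rle_trans with ((Cmod l + 1) ^ m). apply pow_incr; lra.
        simpl. assert (0 <= (Cmod l + 1) ^ m) by (apply pow_le; lra). nra. }
      pose proof (pow_le (Cmod z) (S m) H0). pose proof (pow_le (Cmod l) m H).
      assert (0 <= INR (S m) * Ecoef a (S m)) by (apply Rmult_le_pos; [apply pos_INR|lra]).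
      apply Rle_trans with (INR (S m) * Ecoef a (S m) * (Cmod l + 1) ^ S m * Cmod z ^ S m).
      * apply Rmult_le_compat_r; auto. apply Rmult_le_compat_l; auto.
      * replace (Ecoef a (S m) * (2 ^ S m * (Cmod l + 1) ^ S m * Cmod z ^ S m))
          with (2 ^ S m * (Ecoef a (S m) * (Cmod l + 1) ^ S m * Cmod z ^ S m)) by ring.
        rewrite !Rmult_assoc. apply Rmult_le_compat_r; auto.
        apply Rmult_le_pos. lra. apply Rmult_le_pos; auto. apply pow_le; lra.
  - apply Eser. apply Rmult_le_pos; [|apply Cmod_ge_0]. pose proof (Cmod_ge_0 l); lra.
Qed.

Lemma Cmod_le_sum (z : C) : Cmod z <= Rabs (Re z) + Rabs (Im z).
Proof.
  destruct z as [x y]. unfold Cmod, Re, Im; simpl.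
  rewrite <- (sqrt_Rsqr (Rabs x + Rabs y)) by (pose proof (Rabs_pos x); pose proof (Rabs_pos y); lra).
  apply sqrt_le_1_alt. unfold Rsqr.
  pose proof (Rabs_pos x); pose proof (Rabs_pos y).
  replace (x * (x * 1) + y * (y * 1)) with (Rabs x * Rabs x + Rabs y * Rabs y).
  nra. rewrite <- !Rabs_mult. rewrite !Rabs_pos_eq by nra. ring.
Qed.

Lemma Cseries_bounded (u : nat -> C) : @ex_series C_AbsRing C_NormedModule u ->
  exists M, forall n, Cmod (u n) <= M.
Proof.
  intros H.
  destruct (lim0_bounded _ (ex_series_lim_0 _ (ex_series_Re u H))) as [M1 H1].
  destruct (lim0_bounded _ (ex_series_lim_0 _ (ex_series_Im u H))) as [M2 H2].
  exists (M1 + M2). intro n. eapply Rle_trans. apply Cmod_le_sum. specialize (H1 n). specialize (H2 n). lra.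
Qed.

Lemma pow2_ge' n : INR (S n) <= 2 ^ n.
Proof.
  induction n. simpl; lra. rewrite (S_INR (S n)). change (2 ^ S n) with (2 * 2 ^ n).
  assert (1 <= 2 ^ n) by (apply pow_R1_Rle; lra). lra.
Qed.

Lemma LD_eq c n : LDcoef a c n = (c (S n) * RtoC (gg n))%C.
Proof. reflexivity. Qed.

Lemma LD_entire c : entire_coef c -> entire_coef (LDcoef a c).
Proof.
  intros Hc z.
  set (w := 4 * Cmod z + 1). pose proof (Cmod_ge_0 z) as Hz0.
  assert (Hw : 1 <= w) by (unfold w; lra).
  destruct (Cseries_bounded _ (Hc (RtoC w))) as [M HM].
  set (K := Gamma (2 - a)). assert (HK : 1/2 <= K) by apply G2a.
  set (q := 2 * Cmod z / w).
  assert (Hq : 0 <= q < 1 / 2). { unfold q. split. apply Rmult_le_pos. lra. left; apply Rinv_0_lt_compat; lra.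
    apply Rmult_lt_reg_r with w. lra. unfold Rdiv. rewrite Rmult_assoc, Rinv_l by lra. unfold w; lra. }
  assert (HM0 : 0 <= M) by (eapply Rle_trans; [apply Cmod_ge_0|apply (HM 0%nat)]).
  apply (@ex_series_le C_AbsRing C_CompleteNormedModule _ (fun n => 2 * K * M / w * q ^ n)).
  - intros n. change (norm (LDcoef a c n * z ^ n)%C) with (Cmod (LDcoef a c n * z ^ n)%C).
    rewrite LD_eq. rewrite !Cmod_mult, Cmod_pow, Cmod_R, Rabs_pos_eq by (left; apply gg_pos).
    specialize (HM (S n)). rewrite Cmod_mult, Cmod_pow, Cmod_R, Rabs_pos_eq in HM by lra.
    pose proof (gg_le n) as Hg. fold K in Hg. pose proof (pow2_ge' n) as H2.
    pose proof (Cmod_ge_0 (c (S n))) as Hc0. pose proof (gg_pos n).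
    pose proof (pow_le (Cmod z) n Hz0) as Hzn.
    assert (Hwn : 0 < w ^ S n) by (apply pow_lt; lra).
    apply Rmult_le_reg_r with (w ^ S n); auto.
    assert (E : 2 * K * M / w * q ^ n * w ^ S n = 2 * K * M * (2 * Cmod z) ^ n).
    { replace (2 * Cmod z) with (q * w) by (unfold q; field; lra).
      rewrite Rpow_mult_distr. simpl. field. lra. }
    rewrite E. rewrite Rpow_mult_distr.
    replace (Cmod (c (S n)) * gg n * Cmod z ^ n * w ^ S n) with ((Cmod (c (S n)) * w ^ S n) * gg n * Cmod z ^ n) by ring.
    assert (gg n <= 2 * K * 2 ^ n). { eapply Rle_trans. apply Hg. apply Rmult_le_compat_l. lra. lra. }
    apply Rle_trans with (M * (2 * K * 2 ^ n) * Cmod z ^ n).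
    + apply Rmult_le_compat_r; auto. apply Rmult_le_compat; auto.
      apply Rmult_le_pos; auto. left; auto. left; auto.
    + right; ring.
  - apply (@ex_series_scal R_AbsRing R_NormedModule (2 * K * M / w) (fun n => q ^ n)).
    apply ex_series_geom. rewrite Rabs_pos_eq; lra.
Qed.

Open Scope C_scope.

Lemma RtoC_nz (r : R) : r <> 0%R -> RtoC r <> 0.
Proof. intros H E. apply H. unfold RtoC in E. injection E. auto. Qed.

Lemma Cmult_reg_r (x y g : C) : g <> 0 -> x * g = y * g -> x = y.
Proof.
  intros Hg E. replace x with (x * g * / g) by (field; auto).
  rewrite E. field; auto.
Qed.

Lemma gg_nz n : RtoC (gg n) <> 0.
Proof. apply RtoC_nz. pose proof (gg_pos n). lra. Qed.

Lemma LD_ext c d n : (forall k, c k = d k) -> LDcoef a c n = LDcoef a d n.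
Proof. intros E. rewrite !LD_eq, E. reflexivity. Qed.

Lemma LD_lin (k1 k2 : C) c d n :
  LDcoef a (fun j => k1 * c j + k2 * d j) n = k1 * LDcoef a c n + k2 * LDcoef a d n.
Proof. rewrite !LD_eq. ring. Qed.

Definition Lop (a0 a1 : C) (c : nat -> C) (n : nat) : C :=
  LDcoef a (LDcoef a c) n + a1 * LDcoef a c n + a0 * c n.

Lemma Lop_lin a0 a1 (k1 k2 : C) c d n :
  Lop a0 a1 (fun j => k1 * c j + k2 * d j) n = k1 * Lop a0 a1 c n + k2 * Lop a0 a1 d n.
Proof.
  unfold Lop.
  rewrite (LD_ext (LDcoef a (fun j => k1 * c j + k2 * d j)) (fun j => k1 * LDcoef a c j + k2 * LDcoef a d j))
    by (intro; apply LD_lin).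
  rewrite !LD_lin. ring.
Qed.

Lemma Lop_ext a0 a1 c d n : (forall k, c k = d k) -> Lop a0 a1 c n = Lop a0 a1 d n.
Proof.
  intros E. unfold Lop. rewrite (LD_ext (LDcoef a c) (LDcoef a d)) by (intro; apply LD_ext; auto).
  rewrite (LD_ext c d) by auto. rewrite E. reflexivity.
Qed.

Lemma CPS_Lop a0 a1 c t : entire_coef c ->
  CPSeries (Lop a0 a1 c) (RtoC t) =
  CPSeries (LDcoef a (LDcoef a c)) (RtoC t) + a1 * CPSeries (LDcoef a c) (RtoC t) + a0 * CPSeries c (RtoC t).
Proof.
  intros Hc. pose proof (LD_entire c Hc) as H1. pose proof (LD_entire _ H1) as H2.
  unfold Lop.
  rewrite (CPS_plus (fun n => LDcoef a (LDcoef a c) n + a1 * LDcoef a c n) (fun n => a0 * c n)).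
  2: { apply entire_plus; auto. apply entire_scal; auto. }
  2: { apply entire_scal; auto. }
  rewrite (CPS_plus (LDcoef a (LDcoef a c)) (fun n => a1 * LDcoef a c n)); auto.
  2: { apply entire_scal; auto. }
  rewrite !CPS_scal; auto.
Qed.

Lemma Lop_entire a0 a1 c : entire_coef c -> entire_coef (Lop a0 a1 c).
Proof.
  intros Hc. pose proof (LD_entire c Hc) as H1. pose proof (LD_entire _ H1) as H2.
  unfold Lop. apply entire_plus. apply entire_plus; auto. apply entire_scal; auto. apply entire_scal; auto.
Qed.

Lemma sol_iff a0 a1 c : entire_coef c -> (solves_eq a a0 a1 c <-> forall n, Lop a0 a1 c n = 0).
Proof.
  intros Hc. split.
  - intros Hs. apply cps_zero_coef. apply Lop_entire; auto.
    intros t Ht. rewrite CPS_Lop; auto.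
  - intros HL t Ht. rewrite <- CPS_Lop by auto.
    rewrite (CPS_ext _ (fun _ => RtoC 0)) by auto. apply CPS_zero.
Qed.

Lemma LD_e l n : LDcoef a (ecoef l) n = l * ecoef l n.
Proof.
  rewrite LD_eq. unfold ecoef. rewrite <- (Ecoef_rec n). rewrite RtoC_mult. simpl. ring.
Qed.

Lemma LD_d l n : LDcoef a (dcoef l) n = ecoef l n + l * dcoef l n.
Proof.
  rewrite LD_eq. unfold dcoef, ecoef. destruct n as [|m].
  - rewrite <- (Ecoef_rec 0). change (INR 1) with 1%R. rewrite Rmult_1_l, !RtoC_mult. change (l ^ 0) with (RtoC 1). ring.
  - rewrite <- (Ecoef_rec (S m)). rewrite !RtoC_mult. rewrite (S_INR (S m)), RtoC_plus. simpl Cpow. ring.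
Qed.

Lemma Lop_e a0 a1 l n : Lop a0 a1 (ecoef l) n = (l * l + a1 * l + a0) * ecoef l n.
Proof.
  unfold Lop. rewrite (LD_ext (LDcoef a (ecoef l)) (fun j => l * ecoef l j + 0 * ecoef l j))
    by (intro; rewrite LD_e; ring).
  rewrite LD_lin, !LD_e. ring.
Qed.

Lemma Lop_d a0 a1 l n : Lop a0 a1 (dcoef l) n = (2 * l + a1) * ecoef l n + (l * l + a1 * l + a0) * dcoef l n.
Proof.
  unfold Lop. rewrite (LD_ext (LDcoef a (dcoef l)) (fun j => 1 * ecoef l j + l * dcoef l j))
    by (intro; rewrite LD_d; ring).
  rewrite LD_lin, LD_e, !LD_d. ring.
Qed.

Lemma Lop_expand a0 a1 c n : Lop a0 a1 c n =
  c (S (S n)) * (RtoC (gg (S n)) * RtoC (gg n)) + (a1 * c (S n) * RtoC (gg n) + a0 * c n).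
Proof. unfold Lop. rewrite !LD_eq. ring. Qed.

Lemma sol_unique a0 a1 c d : (forall n, Lop a0 a1 c n = 0) -> (forall n, Lop a0 a1 d n = 0) ->
  c 0%nat = d 0%nat -> c 1%nat = d 1%nat -> forall n, c n = d n.
Proof.
  intros Hc Hd H0 H1.
  assert (forall n, c n = d n /\ c (S n) = d (S n)).
  { induction n. auto. destruct IHn as [E1 E2]. split; auto.
    specialize (Hc n). specialize (Hd n). rewrite Lop_expand in Hc, Hd.
    apply (Cmult_reg_r _ _ (RtoC (gg (S n)) * RtoC (gg n))).
    rewrite <- RtoC_mult. apply RtoC_nz. pose proof (gg_pos n). pose proof (gg_pos (S n)).
    apply Rgt_not_eq. apply Rmult_lt_0_compat; auto.
    rewrite E1, E2 in Hc.
    set (G := RtoC (gg (S n)) * RtoC (gg n)) in *.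
    set (R0 := a1 * d (S n) * RtoC (gg n) + a0 * d n) in *.
    replace (c (S (S n)) * G) with ((c (S (S n)) * G + R0) - R0) by ring.
    replace (d (S (S n)) * G) with ((d (S (S n)) * G + R0) - R0) by ring.
    rewrite Hc, Hd. reflexivity. }
  intro n; apply H.
Qed.

Lemma CPS_scale (b : nat -> C) (l : C) (t : R) : CPSeries b (l * RtoC t) = CPSeries (fun n => b n * l ^ n) (RtoC t).
Proof.
  unfold CPSeries, CSeries. f_equal; apply Series_ext; intro n; rewrite Cpow_mult_l, Cmult_assoc; reflexivity.
Qed.

Lemma Ealpha_eq l t : Ealpha a (l * RtoC t) = CPSeries (ecoef l) (RtoC t).
Proof. unfold Ealpha. rewrite CPS_scale. reflexivity. Qed.

Lemma CPS_shift (d : nat -> C) (t : R) : entire_coef d -> d 0%nat = 0 ->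
  CPSeries d (RtoC t) = RtoC t * CPSeries (fun n => d (S n)) (RtoC t).
Proof.
  intros Hd H0. rewrite !CPS_real.
  rewrite (PSeries_decr_1 (fun n => Re (d n))) by (apply entire_Re; auto).
  rewrite (PSeries_decr_1 (fun n => Im (d n))) by (apply entire_Im; auto).
  rewrite H0. unfold PS_decr_1. unfold RtoC, Cmult; simpl. f_equal; ring.
Qed.

Lemma tEalpha'_eq l t : RtoC t * Ealpha' a (l * RtoC t) = CPSeries (dcoef l) (RtoC t).
Proof.
  rewrite CPS_shift. 2: apply d_entire. 2: reflexivity.
  unfold Ealpha'. rewrite CPS_scale. reflexivity.
Qed.

Lemma E1_inv : RtoC (Ecoef a 1) = / RtoC (gg 0).
Proof.
  pose proof (Ecoef_rec 0) as H. rewrite Ecoef_0 in H.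
  apply (Cmult_reg_r _ _ (RtoC (gg 0))). apply gg_nz.
  rewrite <- RtoC_mult, H. field. apply gg_nz.
Qed.

Lemma LD_at0 c : CPSeries (LDcoef a c) (RtoC 0) = c 1%nat * RtoC (gg 0).
Proof. rewrite CPS_at0. apply LD_eq. Qed.

Lemma ivp_gen a0 a1 x0 x01 (x : R -> C) cx : entire_coef cx ->
  (forall t, (0 <= t)%R -> x t = CPSeries cx (RtoC t)) -> (forall n, Lop a0 a1 cx n = 0) ->
  cx 0%nat = x0 -> cx 1%nat * RtoC (gg 0) = x01 ->
  solves_ivp a a0 a1 x0 x01 x /\
  (forall y, solves_ivp a a0 a1 x0 x01 y -> forall t, (0 <= t)%R -> y t = x t).
Proof.
  intros He Hx HL H0 H1. split.
  - exists cx. split; [split; auto|]. split. apply sol_iff; auto.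
    split. rewrite Hx by lra. rewrite CPS_at0. auto.
    rewrite LD_at0. auto.
  - intros y [c [[Hce Hcy] [Hs [Hy0 Hy1]]]] t Ht.
    pose proof (proj1 (sol_iff a0 a1 c Hce) Hs) as HsL. clear Hs. rename HsL into Hs.
    assert (E : forall n, c n = cx n).
    { apply (sol_unique a0 a1); auto.
      - rewrite <- (CPS_at0 c), <- Hcy by lra. congruence.
      - rewrite LD_at0 in Hy1. apply (Cmult_reg_r _ _ (RtoC (gg 0))). apply gg_nz. congruence. }
    rewrite Hcy, Hx by auto. apply CPS_ext. auto.
Qed.

Lemma basis_gen a0 a1 (f1 f2 : R -> C) c1 c2 : entire_coef c1 -> entire_coef c2 ->
  (forall t, (0 <= t)%R -> f1 t = CPSeries c1 (RtoC t)) ->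
  (forall t, (0 <= t)%R -> f2 t = CPSeries c2 (RtoC t)) ->
  (forall n, Lop a0 a1 c1 n = 0) -> (forall n, Lop a0 a1 c2 n = 0) ->
  (forall k1 k2, k1 * c1 0%nat + k2 * c2 0%nat = 0 -> k1 * c1 1%nat + k2 * c2 1%nat = 0 -> k1 = 0 /\ k2 = 0) ->
  (forall u0 u1, exists k1 k2, k1 * c1 0%nat + k2 * c2 0%nat = u0 /\ k1 * c1 1%nat + k2 * c2 1%nat = u1) ->
  sol_basis a a0 a1 f1 f2.
Proof.
  intros He1 He2 Hf1 Hf2 HL1 HL2 Hind Hspan.
  split; [|split; [|split]].
  - exists c1. split. split; auto. apply sol_iff; auto.
  - exists c2. split. split; auto. apply sol_iff; auto.
  - intros k1 k2 Hz.
    assert (Hc : forall n, k1 * c1 n + k2 * c2 n = 0).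
    { apply cps_zero_coef. apply entire_plus; apply entire_scal; auto.
      intros t Ht. rewrite CPS_plus by (apply entire_scal; auto). rewrite !CPS_scal by auto.
      rewrite <- Hf1, <- Hf2 by auto. apply Hz; auto. }
    apply Hind; apply Hc.
  - intros x [c [[Hce Hcx] Hs]]. pose proof (proj1 (sol_iff a0 a1 c Hce) Hs) as HsL. clear Hs. rename HsL into Hs.
    destruct (Hspan (c 0%nat) (c 1%nat)) as [k1 [k2 [E0 E1]]].
    exists k1, k2. intros t Ht.
    assert (E : forall n, c n = k1 * c1 n + k2 * c2 n).
    { apply (sol_unique a0 a1); auto.
      intro n. rewrite Lop_lin, HL1, HL2. ring. }
    rewrite Hcx by auto. rewrite (CPS_ext _ _ _ E).
    rewrite CPS_plus by (apply entire_scal; auto). rewrite !CPS_scal by auto.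
    rewrite Hf1, Hf2 by auto. reflexivity.
Qed.

Lemma roots2 (a0 a1 l1 l2 : C) : (forall z : C, z * z + a1 * z + a0 = (z - l1) * (z - l2)) ->
  a0 = l1 * l2 /\ a1 = - (l1 + l2).
Proof.
  intros H. pose proof (H 0) as H0. pose proof (H 1) as H1.
  assert (A0 : a0 = l1 * l2). { transitivity (0 * 0 + a1 * 0 + a0). ring. rewrite H0. ring. }
  split; auto.
  transitivity ((1 * 1 + a1 * 1 + a0) - 1 - a0). ring. rewrite H1, A0. ring.
Qed.

Lemma ecoef_0 l : ecoef l 0 = 1.
Proof. unfold ecoef. rewrite Ecoef_0. simpl. ring. Qed.
Lemma ecoef_1 l : ecoef l 1 = RtoC (Ecoef a 1) * l.
Proof. unfold ecoef. simpl. ring. Qed.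
Lemma dcoef_1 l : dcoef l 1 = RtoC (Ecoef a 1).
Proof. unfold dcoef. change (INR 1) with 1%R. rewrite Rmult_1_l. simpl. ring. Qed.

Lemma part_distinct (a0 a1 x0 x01 : C) :
  (forall l1 l2 : C,
     (forall z : C, z * z + a1 * z + a0 = (z - l1) * (z - l2)) ->
     l1 <> l2 ->
     let x := fun t : R =>
       (x01 - l2 * x0) / (l1 - l2) * Ealpha a (l1 * RtoC t)
       + (l1 * x0 - x01) / (l1 - l2) * Ealpha a (l2 * RtoC t) in
     solves_ivp a a0 a1 x0 x01 x /\
     (forall y, solves_ivp a a0 a1 x0 x01 y -> forall t, (0 <= t)%R -> y t = x t) /\
     sol_basis a a0 a1 (fun t => Ealpha a (l1 * RtoC t)) (fun t => Ealpha a (l2 * RtoC t))).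
Proof.
  intros l1 l2 Hf Hne x.
  destruct (roots2 a0 a1 l1 l2 Hf) as [A0 A1].
  assert (Hd : l1 - l2 <> 0). { intro E. apply Hne. transitivity (l1 - l2 + l2). ring. rewrite E. ring. }
  assert (HL : forall l, (l = l1 \/ l = l2) -> forall n, Lop a0 a1 (ecoef l) n = 0).
  { intros l Hl n. rewrite Lop_e, A0, A1. destruct Hl; subst; ring. }
  set (A := (x01 - l2 * x0) / (l1 - l2)). set (B := (l1 * x0 - x01) / (l1 - l2)).
  assert (Hg := gg_nz 0).
  assert (IV := ivp_gen a0 a1 x0 x01 x (fun n => A * ecoef l1 n + B * ecoef l2 n)).
  destruct IV as [IV1 IV2].
  - apply entire_plus; apply entire_scal; apply e_entire.
  - intros t Ht. unfold x. rewrite CPS_plus by (apply entire_scal; apply e_entire).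
    rewrite !CPS_scal by apply e_entire. rewrite !Ealpha_eq. reflexivity.
  - intros n. rewrite Lop_lin, !HL by auto. ring.
  - simpl. rewrite !ecoef_0. unfold A, B. field. auto.
  - simpl. rewrite !ecoef_1, E1_inv. unfold A, B. field. auto.
  - split; auto. split; auto.
    apply (basis_gen a0 a1 _ _ (ecoef l1) (ecoef l2)); try apply e_entire.
    + intros t _. apply Ealpha_eq.
    + intros t _. apply Ealpha_eq.
    + apply HL; auto.
    + apply HL; auto.
    + intros k1 k2 H0 H1. rewrite !ecoef_0 in H0. rewrite !ecoef_1, E1_inv in H1.
      assert (K1 : k1 = 0).
      { apply (Cmult_reg_r _ _ (l1 - l2)); auto.
        transitivity ((k1 * (/ RtoC (gg 0) * l1) + k2 * (/ RtoC (gg 0) * l2)) * RtoC (gg 0) - (k1 * 1 + k2 * 1) * l2).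
        field; auto. rewrite H0, H1. ring. }
      split; auto. subst k1. transitivity (0 * 1 + k2 * 1). ring. auto.
    + intros u0 u1. exists ((u1 * RtoC (gg 0) - l2 * u0) / (l1 - l2)), ((l1 * u0 - u1 * RtoC (gg 0)) / (l1 - l2)).
      rewrite !ecoef_0, !ecoef_1, E1_inv. split; field; auto.
Qed.

Lemma part_double (a0 a1 x0 x01 : C) :
  (forall l : C,
     (forall z : C, z * z + a1 * z + a0 = (z - l) * (z - l)) ->
     let x := fun t : R =>
       x0 * Ealpha a (l * RtoC t) + (x01 - l * x0) * RtoC t * Ealpha' a (l * RtoC t) in
     solves_ivp a a0 a1 x0 x01 x /\
     (forall y, solves_ivp a a0 a1 x0 x01 y -> forall t, (0 <= t)%R -> y t = x t) /\
     sol_basis a a0 a1 (fun t => Ealpha a (l * RtoC t))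
                       (fun t => RtoC t * Ealpha' a (l * RtoC t))).
Proof.
  intros l Hf x.
  destruct (roots2 a0 a1 l l Hf) as [A0 A1].
  assert (HLe : forall n, Lop a0 a1 (ecoef l) n = 0).
  { intros n. rewrite Lop_e, A0, A1. ring. }
  assert (HLd : forall n, Lop a0 a1 (dcoef l) n = 0).
  { intros n. rewrite Lop_d, A0, A1. ring. }
  assert (Hg := gg_nz 0).
  set (B := x01 - l * x0).
  assert (IV := ivp_gen a0 a1 x0 x01 x (fun n => x0 * ecoef l n + B * dcoef l n)).
  destruct IV as [IV1 IV2].
  - apply entire_plus; apply entire_scal. apply e_entire. apply d_entire.
  - intros t Ht. unfold x. rewrite CPS_plus by (apply entire_scal; first [apply e_entire|apply d_entire]).
    rewrite !CPS_scal by (apply e_entire || apply d_entire). rewrite Ealpha_eq, <- tEalpha'_eq.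
    fold B. ring.
  - intros n. rewrite Lop_lin, HLe, HLd. ring.
  - cbv beta. rewrite ecoef_0. simpl. ring.
  - cbv beta. rewrite ecoef_1, dcoef_1, E1_inv. unfold B. field. auto.
  - split; auto. split; auto.
    apply (basis_gen a0 a1 _ _ (ecoef l) (dcoef l)); try apply e_entire; try apply d_entire; auto.
    + intros t _. apply Ealpha_eq.
    + intros t _. apply tEalpha'_eq.
    + intros k1 k2 H0 H1. rewrite ecoef_0 in H0. simpl in H0.
      assert (K1 : k1 = 0). { transitivity (k1 * 1 + k2 * 0). ring. auto. }
      subst k1. split; auto. rewrite ecoef_1, dcoef_1, E1_inv in H1.
      transitivity ((0 * (/ RtoC (gg 0) * l) + k2 * / RtoC (gg 0)) * RtoC (gg 0)). field; auto.
      rewrite H1. ring.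
    + intros u0 u1. exists u0, (u1 * RtoC (gg 0) - l * u0).
      rewrite ecoef_0, ecoef_1, dcoef_1, E1_inv. simpl. split. ring. field; auto.
Qed.

End Main.

Open Scope C_scope.

Theorem mainTheorem17 (a : R) (ha : (0 < a < 1)%R) (a0 a1 x0 x01 : C) :
  (forall l1 l2 : C,
     (forall z : C, z * z + a1 * z + a0 = (z - l1) * (z - l2)) ->
     l1 <> l2 ->
     let x := fun t : R =>
       (x01 - l2 * x0) / (l1 - l2) * Ealpha a (l1 * RtoC t)
       + (l1 * x0 - x01) / (l1 - l2) * Ealpha a (l2 * RtoC t) in
     solves_ivp a a0 a1 x0 x01 x /\
     (forall y, solves_ivp a a0 a1 x0 x01 y -> forall t, (0 <= t)%R -> y t = x t) /\
     sol_basis a a0 a1 (fun t => Ealpha a (l1 * RtoC t)) (fun t => Ealpha a (l2 * RtoC t)))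
  /\
  (forall l : C,
     (forall z : C, z * z + a1 * z + a0 = (z - l) * (z - l)) ->
     let x := fun t : R =>
       x0 * Ealpha a (l * RtoC t) + (x01 - l * x0) * RtoC t * Ealpha' a (l * RtoC t) in
     solves_ivp a a0 a1 x0 x01 x /\
     (forall y, solves_ivp a a0 a1 x0 x01 y -> forall t, (0 <= t)%R -> y t = x t) /\
     sol_basis a a0 a1 (fun t => Ealpha a (l * RtoC t))
                       (fun t => RtoC t * Ealpha' a (l * RtoC t))).
Proof.
  split. apply (part_distinct a ha). apply (part_double a ha).
Qed.
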